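(* Let robots $i$ and $j$ be neighbors. Let $\Theta_{ij}\in\mathbb{R}^7$ be the unknown constant parameter vector described in the context, and let the estimate $\hat\Theta_{ij}$ be generated by the concurrent-learning update described in the context, starting from an arbitrary initial estimate $\hat\Theta_{ij}(t_0)\in\mathbb{R}^7$. Assume that the recorded data matrix $S_{ij}=\mathbf{R}_{ij}\mathbf{R}_{ij}^T\in\mathbb{R}^{7\times 7}$ is full rank. Then the estimation error $\tilde\Theta_{ij}(t_k)=\hat\Theta_{ij}(t_k)-\Theta_{ij}$ is globally exponentially stable: there exist constants $c\ge 1$ and $\rho\in(0,1)$, independent of $\hat\Theta_{ij}(t_0)$, such that $\|\tilde\Theta_{ij}(t_k)\|\le c\,\rho^k\|\tilde\Theta_{ij}(t_0)\|$ for all $k\in\mathbb{N}$.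
   Context: Setting: nonholonomic robots, each with its own odometry frame $\mathcal{O}_i$ (with $x$-axis equal to the robot's initial heading), moving with 4-DoF kinematics (planar position, height, yaw). At sampling instants $t_k=k\Delta t$, $k\in\mathbb{N}$, robot $i$ measures with UWB the distance $d_{ij}(t_k)=\|\mathbf{p}^{\mathcal{O}_i}_i(t_k)-\mathbf{p}^{\mathcal{O}_i}_j(t_k)\|$ to its neighbor $j$, and both robots know their own inertial-odometry displacements $\mathbf{p}^{\mathcal{O}_i}_i(t_k)$, $\mathbf{p}^{\mathcal{O}_j}_j(t_k)$ (exchanged by communication). Using the cosine theorem on two consecutive samples, these measurements yield at each $t_k$ a scalar $y_{ij}(t_k)$ and a unit vector $\Phi_{ij}(t_k)=\Psi_{ij}(t_k)/\|\Psi_{ij}(t_k)\|\in\mathbb{R}^7$ (with $\Psi_{ij}(t_k)\neq 0$ a vector computed from the measured displacements) satisfying the linear regression $y_{ij}(t_k)=\Theta_{ij}^T\Phi_{ij}(t_k)$, where $\Theta_{ij}\in\mathbb{R}^7$ is a constant unknown vector whose first three entries are the initial relative position $\mathbf{p}^{\mathcal{O}_i}_{ij}(t_0)$ of the robots in frame $\mathcal{O}_i$ and whose 6th and 7th entries are $\cos\theta$ and $\sin\theta$, $\theta$ being the initial relative yaw between frames $\mathcal{O}_j$ and $\mathcal{O}_i$. Recorded data: a finite set of previously sampled unit regressors $\Phi_{ij}(s_1),\dots,\Phi_{ij}(s_\varsigma)$ with corresponding outputs $y_{ij}(s_m)=\Theta_{ij}^T\Phi_{ij}(s_m)$; $\mathbf{R}_{ij}=[\Phi_{ij}(s_1),\dots,\Phi_{ij}(s_\varsigma)]$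 and $S_{ij}=\mathbf{R}_{ij}\mathbf{R}_{ij}^T$. Also $U_{ij}(t_k)=\Phi_{ij}(t_k)\Phi_{ij}(t_k)^T$. Estimator: $\hat\Theta_{ij}(t)=\hat\Theta_{ij}(t_k)$ for $t_k<t\le t_{k+1}$ and $\hat\Theta_{ij}(t_{k+1})=\hat\Theta_{ij}(t_k)-\eta\sum_{m=1}^{\varsigma}\Phi_{ij}(s_m)\epsilon_{ij}(s_m)-\eta\,\Phi_{ij}(t_k)\epsilon_{ij}(t_k)$, where the innovations are $\epsilon_{ij}(s)=\hat\Theta_{ij}(t_k)^T\Phi_{ij}(s)-y_{ij}(s)$ and the learning rate is $\eta=\dfrac{\lambda_{\min}(S_{ij})}{\lambda_{\max}(U_{ij}(t_k))+\lambda_{\max}(S_{ij})^2}$ ($\lambda_{\min},\lambda_{\max}$ denote smallest/largest eigenvalues). *)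

(* Defs.v *)
From mathcomp Require Import all_boot all_order all_algebra.
From mathcomp Require Import boolp classical_sets reals.
Set Implicit Arguments. Unset Strict Implicit. Unset Printing Implicit Defensive.
Import Order.TTheory GRing.Theory Num.Theory.
Local Open Scope ring_scope.
Local Open Scope classical_set_scope.

Definition vnorm {R : realType} {n : nat} (v : 'cV[R]_n) : R :=
  Num.sqrt (\sum_(i < n) v i 0 ^+ 2).

Definition dotv {R : realType} {n : nat} (a b : 'cV[R]_n) : R := (a^T *m b) 0 0.

Definition lambda_min {R : realType} {n : nat} (A : 'M[R]_n) : R :=
  inf [set a : R | eigenvalue A a].
Definition lambda_max {R : realType} {n : nat} (A : 'M[R]_n) : R :=
  sup [set a : R | eigenvalue A a].

Definition rec_mx {R : realType} {n vs : nat} (Phis : 'I_vs -> 'cV[R]_n)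
  : 'M[R]_(n, vs) := \matrix_(i < n, m < vs) Phis m i 0.

Definition S_mx {R : realType} {n vs : nat} (Phis : 'I_vs -> 'cV[R]_n) : 'M[R]_n :=
  rec_mx Phis *m (rec_mx Phis)^T.

Definition U_mx {R : realType} {n : nat} (phi : 'cV[R]_n) : 'M[R]_n := phi *m phi^T.

Definition cl_eta {R : realType} {n vs : nat} (Phis : 'I_vs -> 'cV[R]_n)
  (phi : 'cV[R]_n) : R :=
  lambda_min (S_mx Phis) / (lambda_max (U_mx phi) + lambda_max (S_mx Phis) ^+ 2).

Fixpoint cl_est {R : realType} {n vs : nat}
  (Phis : 'I_vs -> 'cV[R]_n) (ys : 'I_vs -> R)
  (Phi : nat -> 'cV[R]_n) (y : nat -> R) (theta0 : 'cV[R]_n) (k : nat) : 'cV[R]_n :=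
  match k with
  | 0 => theta0
  | k'.+1 =>
      let th := cl_est Phis ys Phi y theta0 k' in
      let eta := cl_eta Phis (Phi k') in
      th - eta *: (\sum_(m < vs) (dotv th (Phis m) - ys m) *: Phis m)
         - eta *: ((dotv th (Phi k') - y k') *: Phi k')
  end.

(* Main.v *)
Require Import Defs.
From mathcomp Require Import all_boot all_order all_algebra.
From mathcomp Require Import boolp classical_sets reals.
From mathcomp Require Import ring lra.
Import Order.TTheory GRing.Theory Num.Theory.
Local Open Scope ring_scope.
Set Implicit Arguments. Unset Strict Implicit. Unset Printing Implicit Defensive.

Section L.
Variable R : realType.
Variable n : nat.
Implicit Types (A T : 'M[R]_n) (x y z : 'cV[R]_n).

Definition n2 x : R := (x^T *m x) 0 0.
Definition bf A y z : R := (y^T *m A *m z) 0 0.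
Definition qf A x : R := bf A x x.

Lemma n2E x : n2 x = \sum_i x i 0 ^+ 2.
Proof. by rewrite /n2 mxE; apply: eq_bigr => i _; rewrite !mxE expr2. Qed.

Lemma n2_ge0 x : 0 <= n2 x.
Proof. by rewrite n2E; apply: sumr_ge0 => i _; apply: sqr_ge0. Qed.

Lemma n2_coord x i : x i 0 ^+ 2 <= n2 x.
Proof.
rewrite n2E (bigD1 i) //= lerDl; apply: sumr_ge0 => j _; exact: sqr_ge0.
Qed.

Lemma n2_eq0 x : n2 x = 0 -> x = 0.
Proof.
move=> h; apply/matrixP => i j; rewrite (ord1 j) mxE.
have := n2_coord x i; rewrite h => hh.
have : x i 0 ^+ 2 = 0 by apply/le_anti; rewrite hh sqr_ge0.
by move/eqP; rewrite sqrf_eq0 => /eqP.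
Qed.

Lemma vnormE x : vnorm x = Num.sqrt (n2 x).
Proof. by rewrite n2E. Qed.

Lemma bfE A y z : bf A y z = \sum_j \sum_i y i 0 * A i j * z j 0.
Proof.
rewrite /bf mxE; apply: eq_bigr => j _; rewrite mxE mulr_suml; apply: eq_bigr => i _.
by rewrite !mxE.
Qed.

Lemma bf_sym A y z : A^T = A -> bf A y z = bf A z y.
Proof.
move=> hA; rewrite !bfE exchange_big; apply: eq_bigr => i _; apply: eq_bigr => j _.
have -> : A j i = A i j by rewrite -{1}hA mxE.
ring.
Qed.

Lemma bfDr A x y z : bf A x (y + z) = bf A x y + bf A x z.
Proof. by rewrite /bf mulmxDr mxE. Qed.
Lemma bfDl A x y z : bf A (x + y) z = bf A x z + bf A y z.
Proof. by rewrite /bf linearD /= !mulmxDl mxE. Qed.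
Lemma bfZr A x y (t : R) : bf A x (t *: y) = t * bf A x y.
Proof. by rewrite /bf -scalemxAr mxE. Qed.
Lemma bfZl A x y (t : R) : bf A (t *: x) y = t * bf A x y.
Proof. by rewrite /bf linearZ /= -!scalemxAl mxE. Qed.

Lemma n2_bf x : n2 x = bf 1%:M x x.
Proof. by rewrite /bf mulmx1. Qed.

Lemma qf_le A : exists K : R, 0 < K /\ forall x, qf A x <= K * n2 x.
Proof.
exists (\sum_j \sum_i `|A i j| + 1); split.
  by apply: ltr_wpDl => //; apply: sumr_ge0 => i _; apply: sumr_ge0 => j _.
move=> x; rewrite /qf bfE mulrDl ler_wpDr ?mulr_ge0 ?n2_ge0 //.
rewrite mulr_suml; apply: ler_sum => i _; rewrite mulr_suml; apply: ler_sum => j _.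
have hi := n2_coord x i; have hj := n2_coord x j.
have h1 : x i 0 * x j 0 <= n2 x.
  have := sqr_ge0 (x i 0 - x j 0); rewrite sqrrB; nra.
have h2 : - n2 x <= x i 0 * x j 0.
  have := sqr_ge0 (x i 0 + x j 0); rewrite sqrrD; nra.
have h3 : `|x i 0 * x j 0| <= n2 x by rewrite ler_norml h1 andbT.
apply: le_trans (ler_norm _) _.
rewrite mulrAC normrM mulrC; apply: ler_wpM2l => //.
by rewrite mulrC.
Qed.


Lemma n2_gt0 x : x != 0 -> 0 < n2 x.
Proof.
move=> hx; rewrite lt_def n2_ge0 andbT; apply/eqP => h; move/eqP: hx; apply.
exact: n2_eq0.
Qed.

Lemma qf_expand A x y (t : R) : A^T = A ->
  qf A (x + t *: y) = qf A x + 2 * t * bf A y x + t ^+ 2 * qf A y.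
Proof.
move=> hA; rewrite /qf bfDl !bfDr !bfZl !bfZr (bf_sym x y hA); ring.
Qed.

Lemma cs A y x : A^T = A -> (forall z, 0 <= qf A z) ->
  bf A y x ^+ 2 <= qf A y * qf A x.
Proof.
move=> hA hpsd.
have key t : 0 <= qf A x + 2 * t * bf A y x + t ^+ 2 * qf A y.
  by rewrite -qf_expand //.
set a := qf A y; set b := bf A y x; set c := qf A x.
have ha : 0 <= a by apply: hpsd.
have hc : 0 <= c by apply: hpsd.
fold a b c in key.
have [a0|a0] := eqVneq a 0.
  have [b0|b0] := eqVneq b 0.
    by rewrite b0 a0 expr0n /= mul0r.
  have := key (- (c + 1) / (2 * b)); rewrite a0 mulr0 addr0.
  have -> : 2 * (- (c + 1) / (2 * b)) * b = - (c + 1) by field; rewrite b0.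
  lra.
have apos : 0 < a by rewrite lt_def a0 ha.
have := key (- b / a).
have -> : c + 2 * (- b / a) * b + (- b / a) ^+ 2 * a = c - b ^+ 2 / a by field.
rewrite subr_ge0 ler_pdivrMr // => h; rewrite mulrC; exact: h.
Qed.

Lemma qfN A x : qf (- A) x = - qf A x.
Proof. by rewrite /qf /bf mulmxN mulNmx mxE. Qed.

Lemma n2_mul (B : 'M[R]_n) x : n2 (B *m x) = qf (B^T *m B) x.
Proof. by rewrite /n2 /qf /bf trmx_mul !mulmxA. Qed.

Lemma psd_n2 T (b : R) : T^T = T -> (forall z, 0 <= qf T z) -> 0 <= b ->
  (forall z, qf T z <= b * n2 z) -> forall x, n2 (T *m x) <= b * qf T x.
Proof.
move=> hT hpsd hb hub x.
have e1 : bf T (T *m x) x = n2 (T *m x) by rewrite /bf /n2 -mulmxA.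
have := cs (T *m x) x hT hpsd; rewrite e1.
have := hub (T *m x); rewrite /qf => h1 h2.
have hq := hpsd x; rewrite /qf in hq.
set p := n2 (T *m x) in e1 h1 h2 *.
have hp : 0 <= p := n2_ge0 _.
have [p0|p0] := eqVneq p 0; first by rewrite p0 mulr_ge0.
have pp : 0 < p by rewrite lt_def p0 hp.
have h3 : p ^+ 2 <= b * p * bf T x x.
  apply: le_trans h2 _; by rewrite ler_wpM2r.
nra.
Qed.

Lemma qf_sub A (m : R) x : qf (A - m%:M) x = qf A x - m * n2 x.
Proof.
rewrite /qf /bf mulmxBr mulmxBl mul_mx_scalar -scalemxAl.
have h : (m *: (x^T *m x)) 0 0 = m * n2 x by rewrite mxE.
by rewrite -h [in LHS]mxE [X in _ + X]mxE.
Qed.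

End L.

Section M.
Variable R : realType.
Variable n : nat.
Implicit Types (A T : 'M[R]_n.+1) (x y z : 'cV[R]_n.+1).

Lemma eig_qf A l : A^T = A -> eigenvalue A l ->
  exists2 x, x != 0 & qf A x = l * n2 x.
Proof.
move=> hA /eigenvalueP [v hv v0]; exists v^T.
  by apply: contra v0 => /eqP h; rewrite -[v]trmxK h linear0.
have hx : A *m v^T = l *: v^T by rewrite -hA -trmx_mul hv linearZ.
by rewrite /qf /bf -mulmxA hx -scalemxAr [LHS]mxE.
Qed.

Lemma eig_min A : A^T = A ->
  exists l, eigenvalue A l /\ forall x, l * n2 x <= qf A x.
Proof.
move=> hA.
pose E : set R := fun r => exists2 x, x != 0 & r = qf A x / n2 x.
have [K [K0 hK]] := qf_le (- A).
have lbE : lbound E (- K).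
  move=> r [x x0 ->]; have hp := n2_gt0 x0.
  rewrite ler_pdivlMr //; have := hK x; rewrite qfN; lra.
set x1 : 'cV[R]_n.+1 := const_mx 1.
have x10 : x1 != 0.
  apply/eqP => /matrixP /(_ 0 0); rewrite !mxE => /eqP; by rewrite oner_eq0.
have neE : E (qf A x1 / n2 x1) by exists x1.
have hasl : has_lbound E by exists (- K).
set m := inf E.
have hm : forall x, m * n2 x <= qf A x.
  move=> x; have [->|x0] := eqVneq x 0.
    by rewrite /n2 /qf /bf !mulmx0 mxE mulr0.
  have := ge_inf hasl (ex_intro2 _ _ x x0 erefl).
  by rewrite ler_pdivlMr ?n2_gt0.
exists m; split => //.
case: (boolP (eigenvalue A m)) => // hne; exfalso.
set T := A - m%:M.
have hTu : T \in unitmx.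
  by rewrite -row_free_unit -kermx_eq0; move: hne; rewrite /eigenvalue /eigenspace negbK.
have hTs : T^T = T by rewrite /T linearB /= tr_scalar_mx hA.
have hpsd : forall z, 0 <= qf T z by move=> z; rewrite qf_sub subr_ge0.
have [KT [KT0 hKT]] := qf_le T.
have hn2T := psd_n2 hTs hpsd (ltW KT0) hKT.
have [C [C0 hC]] := qf_le ((invmx T)^T *m invmx T).
have key : forall x, n2 x <= C * KT * qf T x.
  move=> x; have e : x = invmx T *m (T *m x) by rewrite mulKmx.
  rewrite {1}e n2_mul; apply: le_trans (hC _) _.
  rewrite -mulrA; apply: ler_wpM2l; [exact: ltW|exact: hn2T].
set eps := (C * KT)^-1.
have epos : 0 < eps by rewrite invr_gt0 mulr_gt0.
have lb2 : lbound E (m + eps).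
  move=> r [x x0 ->]; have hp := n2_gt0 x0.
  rewrite ler_pdivlMr //.
  have := key x; rewrite qf_sub => h.
  have hCK : 0 < C * KT by rewrite mulr_gt0.
  have : n2 x * eps <= qf A x - m * n2 x.
    by rewrite ler_pdivrMr // mulrC.
  lra.
have := lb_le_inf (ex_intro _ _ neE) lb2; rewrite -/m; lra.
Qed.

Lemma eig_max A : A^T = A ->
  exists l, eigenvalue A l /\ forall x, qf A x <= l * n2 x.
Proof.
move=> hA.
have hNA : (- A)^T = - A by rewrite linearN /= hA.
have [l [hl hlb]] := eig_min hNA.
exists (- l); split.
  move/eigenvalueP: hl => [v hv v0]; apply/eigenvalueP; exists v => //.
  have e : v *m A = - (v *m - A) by rewrite mulmxN opprK.
  by rewrite e hv scaleNr.
by move=> x; have := hlb x; rewrite qfN mulNr; lra.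
Qed.

Lemma lmin_eq A : A^T = A ->
  exists l, lambda_min A = l /\ eigenvalue A l /\ forall x, l * n2 x <= qf A x.
Proof.
move=> hA; have [l [hl hb]] := eig_min hA; exists l; split => //.
have lb : lbound [set a : R | eigenvalue A a] l.
  move=> a /= ha; have [x x0 hx] := eig_qf hA ha.
  have hp := n2_gt0 x0; have := hb x; rewrite hx; move/ler_pM2r: hp => ->//.
apply/le_anti/andP; split.
  apply: ge_inf; [by exists l | exact: hl].
by apply: lb_le_inf => //; exists l.
Qed.

Lemma lmax_eq A : A^T = A ->
  exists l, lambda_max A = l /\ eigenvalue A l /\ forall x, qf A x <= l * n2 x.
Proof.
move=> hA; have [l [hl hb]] := eig_max hA; exists l; split => //.
have ub : ubound [set a : R | eigenvalue A a] l.
  move=> a /= ha; have [x x0 hx] := eig_qf hA ha.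
  have hp := n2_gt0 x0; have := hb x; rewrite hx; move/ler_pM2r: hp => ->//.
apply/le_anti/andP; split.
  by apply: ge_sup => //; exists l.
apply: ub_le_sup; [by exists l | exact: hl].
Qed.

End M.

Section N.
Variable R : realType.
Variable n : nat.
Implicit Types (A T : 'M[R]_n) (x y z e : 'cV[R]_n).

Lemma n2_of_vnorm x : vnorm x = 1 -> n2 x = 1.
Proof.
rewrite vnormE => h; by rewrite -(sqr_sqrtr (n2_ge0 x)) h expr1n.
Qed.

Lemma mul_1x1 (P : 'cV[R]_n) (c : 'M[R]_1) : P *m c = c 0 0 *: P.
Proof.
apply/matrixP => i j; rewrite (ord1 j) !mxE big_ord1 mulrC.
by [].
Qed.

Lemma dotv_sub (a b P : 'cV[R]_n) : dotv a P - dotv b P = dotv (a - b) P.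
Proof.
have e : forall (M N : 'M[R]_(1,1)), (M - N) 0 0 = M 0 0 - N 0 0 by move=> M N; rewrite !mxE.
by rewrite /dotv linearB /= mulmxBl e.
Qed.

Lemma dotv_U e (P : 'cV[R]_n) : dotv e P *: P = (P *m P^T) *m e.
Proof.
rewrite -mulmxA mul_1x1 /dotv; congr (_ *: _).
by rewrite -[e^T *m P]trmxK trmx_mul trmxK mxE.
Qed.

Lemma rec_sum vs (Phis : 'I_vs -> 'cV[R]_n) :
  S_mx Phis = \sum_m (Phis m *m (Phis m)^T).
Proof.
apply/matrixP => i j; rewrite /S_mx /rec_mx !mxE summxE.
by apply: eq_bigr => m _; rewrite !mxE big_ord1 !mxE.
Qed.

Lemma qfD A (B : 'M[R]_n) x : qf (A + B) x = qf A x + qf B x.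
Proof. by rewrite /qf /bf mulmxDr mulmxDl mxE. Qed.

Lemma bf1_qf (M : 'M[R]_n) e : bf 1%:M (M *m e) e = qf M e.
Proof.
by rewrite (@bf_sym R n 1%:M) ?tr_scalar_mx // /bf /qf mulmx1 mulmxA.
Qed.

Lemma qfU (P : 'cV[R]_n) x : qf (P *m P^T) x = (bf 1%:M P x) ^+ 2.
Proof.
rewrite /qf /bf mulmx1 mulmxA -(mulmxA (x^T *m P)) mxE big_ord1 expr2; congr (_ * _).
by rewrite -[x^T *m P]trmxK trmx_mul trmxK mxE.
Qed.

End N.

Lemma n2_mulg (R : realType) m n (B : 'M[R]_(m,n)) (x : 'cV[R]_n) :
  n2 (B *m x) = qf (B^T *m B) x.
Proof. by rewrite /n2 /qf /bf trmx_mul !mulmxA. Qed.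

Theorem theorem1 (R : realType) (Theta : 'cV[R]_7)
  (vs : nat) (Phis : 'I_vs -> 'cV[R]_7) (ys : 'I_vs -> R)
  (Phi : nat -> 'cV[R]_7) (y : nat -> R)
  (hPhis_unit : forall m, vnorm (Phis m) = 1)
  (hys : forall m, ys m = dotv Theta (Phis m))
  (hPhi_unit : forall k, vnorm (Phi k) = 1)
  (hy : forall k, y k = dotv Theta (Phi k))
  (hS : \rank (S_mx Phis) = 7%N) :
  exists c rho : R, 1 <= c /\ 0 < rho < 1 /\
    forall (theta0 : 'cV[R]_7) (k : nat),
      vnorm (cl_est Phis ys Phi y theta0 k - Theta)
        <= c * rho ^+ k * vnorm (theta0 - Theta).
Proof.
set S := S_mx Phis.
have hSs : S^T = S by rewrite /S /S_mx trmx_mul trmxK.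
have hSpsd : forall x, 0 <= qf S x.
  have eS : S = ((rec_mx Phis)^T)^T *m (rec_mx Phis)^T by rewrite trmxK.
  by move=> x; rewrite eS -n2_mulg n2_ge0.
have [a [ha [eiga hqa]]] := lmin_eq hSs.
have [b [hb [eigb hqb]]] := lmax_eq hSs.
have a0 : a != 0.
  apply/eqP => a0; move: eiga; rewrite a0 /eigenvalue /eigenspace.
  have -> : (0 : R)%:M = 0 :> 'M[R]_7 by apply/matrixP => i j; rewrite !mxE mul0rn.
  rewrite subr0 kermx_eq0 /row_free hS; by [].
have age0 : 0 <= a.
  have [x x0 hx] := eig_qf hSs eiga; have hp := n2_gt0 x0.
  have := hSpsd x; rewrite hx pmulr_lge0 //.
have apos : 0 < a by rewrite lt_def a0 age0.
have ab : a <= b.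
  have [x x0 hx] := eig_qf hSs eiga; have hp := n2_gt0 x0.
  have := hqb x; rewrite hx ler_pM2r //.
have hU : forall k, lambda_max (U_mx (Phi k)) = 1 /\
    forall x, qf (U_mx (Phi k)) x <= n2 x.
  move=> k; set P := Phi k.
  have hP : n2 P = 1 by exact: (n2_of_vnorm (hPhi_unit k)).
  have hUs : (U_mx P)^T = U_mx P by rewrite /U_mx trmx_mul trmxK.
  have hub : forall x, qf (U_mx P) x <= n2 x.
    move=> x; rewrite /U_mx qfU.
    have := @cs R 7 1%:M P x (tr_scalar_mx _ _) (fun z => eq_ind _ (fun t => 0 <= t) (n2_ge0 z) _ (n2_bf z)).
    by rewrite /qf -!n2_bf hP mul1r.
  split => //.
  have [l [hl [eigl hql]]] := lmax_eq hUs.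
  rewrite hl; apply/le_anti/andP; split.
    have [x x0 hx] := eig_qf hUs eigl; have hp := n2_gt0 x0.
    have := hub x; rewrite hx -{2}(mul1r (n2 x)) ler_pM2r //.
  have := hql P; rewrite /U_mx qfU hP mulr1.
  by rewrite /bf mulmx1 -/(n2 P) hP expr1n.
set eta := a / (1 + b ^+ 2).
have hb2 : 0 < 1 + b ^+ 2 by rewrite ltr_pwDl // sqr_ge0.
have etapos : 0 < eta by rewrite divr_gt0.
have hetak : forall k, cl_eta Phis (Phi k) = eta.
  by move=> k; rewrite /cl_eta -/S ha hb (hU k).1.
have heb : eta * (b + 1) < 2.
  rewrite /eta mulrAC ltr_pdivrMr //; nra.
set g := 2 - eta * (b + 1).
have gpos : 0 < g by rewrite subr_gt0.
set rho2 := Num.max (1 - eta * g * a) (2^-1).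
have r2pos : 0 < rho2 by rewrite lt_max invr_gt0 ltr0n orbT.
have r2lt1 : rho2 < 1.
  rewrite gt_max; apply/andP; split.
    have := mulr_gt0 (mulr_gt0 etapos gpos) apos; lra.
  by rewrite invf_lt1 ?ltr0n // ltr1n.
have step : forall theta0 k,
    n2 (cl_est Phis ys Phi y theta0 k.+1 - Theta) <=
    rho2 * n2 (cl_est Phis ys Phi y theta0 k - Theta).
  move=> theta0 k; rewrite /=.
  set th := cl_est Phis ys Phi y theta0 k.
  set e := th - Theta.
  set P := Phi k.
  set M := S + U_mx P.
  have hsum : \sum_(m < vs) (dotv th (Phis m) - ys m) *: Phis m = S *m e.
    rewrite /S rec_sum mulmx_suml; apply: eq_bigr => m _.
    by rewrite hys dotv_sub dotv_U.
  have hone : (dotv th P - y k) *: P = U_mx P *m e.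
    by rewrite hy dotv_sub dotv_U.
  rewrite hsum hone hetak.
  have -> : th - eta *: (S *m e) - eta *: (U_mx P *m e) - Theta
      = e + (- eta) *: (M *m e).
    rewrite /e /M mulmxDl scalerDr !scaleNr -!addrA; congr (_ + _).
    by rewrite [RHS]addrC -addrA.
  have hMs : M^T = M.
    by rewrite /M linearD /= hSs /U_mx trmx_mul trmxK.
  have hMpsd : forall z, 0 <= qf M z.
    move=> z; rewrite /M qfD addr_ge0 //; rewrite /U_mx qfU; exact: sqr_ge0.
  have hMub : forall z, qf M z <= (b + 1) * n2 z.
    move=> z; rewrite /M qfD mulrDl mul1r lerD //; exact: (hU k).2.
  have hb0 : 0 <= b + 1 by apply: addr_ge0 => //; apply: le_trans ab; exact: ltW.
  have hw := psd_n2 hMs hMpsd hb0 hMub e.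
  have hq : a * n2 e <= qf M e.
    by rewrite /M qfD; have := hqa e; have := (hMpsd e); rewrite /M qfD; 
      have := hSpsd e; rewrite /U_mx qfU => h1 h2 h3; have := sqr_ge0 (bf 1%:M P e); lra.
  have n2q : forall z : 'cV[R]_7, n2 z = qf 1%:M z by move=> z; rewrite /qf -n2_bf.
  rewrite (n2q (e + _)) qf_expand ?tr_scalar_mx // bf1_qf -!n2q.
  have hN := n2_ge0 e.
  set N := n2 e in hN hq *; set q := qf M e in hq hw *; set w := n2 (M *m e) in hw *.
  have h1 : eta ^+ 2 * w <= eta ^+ 2 * ((b + 1) * q) by rewrite ler_wpM2l // sqr_ge0.
  have h2 : 0 <= eta * g * (q - a * N).
    by apply: mulr_ge0; [apply: mulr_ge0; exact: ltW | rewrite subr_ge0].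
  have h3 : 1 - eta * g * a <= rho2 by rewrite le_max lexx.
  have h4 : (1 - eta * g * a) * N <= rho2 * N by rewrite ler_wpM2r.
  rewrite /g in h2 h4.
  have e2 : (- eta) ^+ 2 = eta ^+ 2 by rewrite sqrrN.
  rewrite e2.
  nra.
exists 1, (Num.sqrt rho2); split => //; split.
  by rewrite sqrtr_gt0 r2pos -sqrtr1 ltr_sqrt // ltr01.
move=> theta0; elim => [|k IH]; first by rewrite expr0 !mul1r.
rewrite exprS mul1r -mulrA; rewrite mul1r in IH.
apply: le_trans (ler_wpM2l (sqrtr_ge0 _) IH).
rewrite !vnormE -(sqrtrM _ (ltW r2pos)); apply: ler_wsqrtr; exact: step.
Qed.
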